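(* For every generic game $G=(\hat P,\hat Q,\hat U)$ with players $p_1,\dots,p_n$, actions $q_1,\dots,q_m$ and utility functions $\hat u_i:\hat Q^n\to\mathbb R$, there exists a cGAP $\Pi$ whose vertices (players) are $p_1,\dots,p_n$ and whose VC rule has size $m$ (action $q_j$ identified with choice $j$) such that the strong equilibria of $\Pi$ coincide with the (pure-strategy) Nash equilibria of $G$: for every state (strategy profile) $S$, $\mathcal{MM}(\Pi_S)$ is a strong equilibrium of $\Pi$ if and only if $S$ is a Nash equilibrium of $G$, and every strong equilibrium of $\Pi$ is of the form $\mathcal{MM}(\Pi_S)$ for some state $S$.
   Context: Fix disjoint sets of unary vertex predicate symbols and binary edge predicate symbols; constants are the vertices (players). An annotation is an element of $[0,1]$, an annotation variable (ranging over $[0,1]$), or $f(t_1,\dots,t_k)$ for an annotation function symbol $f$ denoting a fixed function $[0,1]^k\to[0,1]$. An annotated rule has the form $A_0:f(\mu_1,\dots,\mu_n)\leftarrow A_1:\mu_1,\dots,A_n:\mu_n$ ($n=0$: a fact); a GAP is a finite set of such rules. A vertex choice (VC) rule of size $m$ is $b_1(X),\dots,b_m(X)\hookleftarrow a_1(X),\dots,a_m(X)$ with $a_i,b_i$ vertex predicate symbols. A choice GAP (cGAP) $\Pi$ is a finite set of annotated rules plus exactly one VC rule. An interpretation is a map $I$ from ground atoms to $[0,1]$, ordered pointwise. $I\models A:\mu$ iff $I(A)\ge\mu$; $I$ satisfies a ground annotated rule iff its head atom gets at least the head annotation or some body annotated atom is not satisfied; $I$ satisfies a ground VC rule $B_1,\dots,B_m\hookleftarrow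 A_1,\dots,A_m$ iff there is $i$ with $I(B_i)=I(A_i)$ and $I(B_j)=0$ for $j\neq i$; models satisfy all ground instances of all rules. Every GAP $P$ has a unique minimal model $\mathcal{MM}(P)$. ${\rm coh}(\Pi,I)$ is the GAP of all ground non-VC rules of $\Pi$ plus, for each ground VC-rule instance and each $i$ with $I(A_i(v))>0$ and $I(A_i(v))=I(B_i(v))$, the rule $B_i(v):\mu\leftarrow A_i(v):\mu$; a model $M$ is coherent iff $M=\mathcal{MM}({\rm coh}(\Pi,M))$. A coherent model $I$ is a strong equilibrium iff for every ground VC-rule instance $B_1,\dots,B_m\hookleftarrow A_1,\dots,A_m$, $\sum_{i}I(B_i)=\max_i I(A_i)$. A state is a map $S$ from players to $\{1,\dots,m\}$; the induced ground GAP $\Pi_S$ replaces each ground VC-rule instance for vertex $v$ by $b_i(v):\mu\leftarrow a_i(v):\mu$ with $i=S(v)$ and keeps all other ground rules. A generic game is $G=(\hat P,\hat Q,\hat U)$; a profile $s\in\hat Q^n$ is a Nash equilibrium iff no player $p_i$ can increase $\hat u_i$ by changing only its own action. *)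

(* Defs.v *)
From Stdlib Require Import Reals.
From mathcomp Require Import all_boot.

Set Implicit Arguments.
Unset Strict Implicit.
Unset Printing Implicit Defensive.

Inductive term (V : Type) := TVar (x : nat) | TCst (v : V).

(* atoms: vertex predicate symbols and edge predicate symbols are two
   disjoint copies of nat (distinguished by the constructor). *)
Inductive atom (V : Type) :=
| VA (p : nat) (t : term V)
| EA (p : nat) (t1 t2 : term V).

Inductive gatom (V : Type) :=
| GVA (p : nat) (v : V)
| GEA (p : nat) (v w : V).

Inductive annot :=
| ACst (c : R)
| AVar (x : nat)
| AFun (f : list R -> R) (ts : list annot).

Fixpoint aeval (s : nat -> R) (t : annot) : R :=
  match t with
  | ACst c => c
  | AVar x => s x
  | AFun f ts =>
      f ((fix go (l : list annot) : list R :=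
            match l with nil => nil | cons t l => cons (aeval s t) (go l) end) ts)
  end.

Definition in01 (x : R) : Prop := Rle R0 x /\ Rle x R1.

Definition fun01 (f : list R -> R) : Prop :=
  forall xs : list R, (forall x, List.In x xs -> in01 x) -> in01 (f xs).

Fixpoint wf_annot (t : annot) : Prop :=
  match t with
  | ACst c => in01 c
  | AVar _ => True
  | AFun f ts =>
      fun01 f /\
      (fix go (l : list annot) : Prop :=
         match l with nil => True | cons t l => wf_annot t /\ go l end) ts
  end.

(* annotated rule  head : hfun(mu_1,...,mu_n) <- A_1:mu_1, ..., A_n:mu_n *)
Record arule (V : Type) := ARule {
  rhead : atom V;
  rfun  : list R -> R;
  rbody : list (atom V * annot) }.

Definition wf_rule V (r : arule V) : Prop :=
  fun01 (rfun r) /\ forall Am, List.In Am (rbody r) -> wf_annot Am.2.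

(* cGAP: finite set of annotated rules plus exactly one VC rule
   b_1(X),...,b_m(X) <-' a_1(X),...,a_m(X), stored as the list of pairs
   (a_i, b_i) of vertex predicate symbols; its size is m. *)
Record cgap (V : Type) := CGap {
  crules : list (arule V);
  cvc    : list (nat * nat) }.

Definition wf_cgap V (P : cgap V) : Prop :=
  forall r, List.In r (crules P) -> wf_rule r.

Definition vc_a (vc : list (nat * nat)) (i : nat) : nat := (nth (0%N, 0%N) vc i).1.
Definition vc_b (vc : list (nat * nat)) (i : nat) : nat := (nth (0%N, 0%N) vc i).2.

Definition interp (V : Type) := gatom V -> R.

Definition valid V (I : interp V) : Prop := forall A, in01 (I A).

Definition inst_term V (th : nat -> V) (t : term V) : V :=
  match t with TVar x => th x | TCst v => v end.

Definition inst_atom V (th : nat -> V) (A : atom V) : gatom V :=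
  match A with
  | VA p t => GVA p (inst_term th t)
  | EA p t1 t2 => GEA p (inst_term th t1) (inst_term th t2)
  end.

Definition sat_rule V (I : interp V) (r : arule V) : Prop :=
  forall (th : nat -> V) (s : nat -> R), (forall x, in01 (s x)) ->
    (forall Am, List.In Am (rbody r) -> (Rle (aeval s Am.2) (I (inst_atom th Am.1)))) ->
    (Rle (rfun r (map (fun Am => aeval s Am.2) (rbody r))) (I (inst_atom th (rhead r)))).

Definition gap (V : Type) := arule V -> Prop.

Definition gap_model V (P : gap V) (I : interp V) : Prop :=
  valid I /\ forall r, P r -> sat_rule I r.

Definition least_model V (P : gap V) (M : interp V) : Prop :=
  gap_model P M /\ forall I, gap_model P I -> forall A, (Rle (M A) (I A)).

Definition rules_of V (P : cgap V) : gap V := fun r => List.In r (crules P).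

Definition sat_vc V (vc : list (nat * nat)) (I : interp V) : Prop :=
  forall v : V, exists i, (i < size vc)%N /\
    I (GVA (vc_b vc i) v) = I (GVA (vc_a vc i) v) /\
    forall j, (j < size vc)%N -> j <> i -> I (GVA (vc_b vc j) v) = R0.

Definition cgap_model V (P : cgap V) (I : interp V) : Prop :=
  gap_model (rules_of P) I /\ sat_vc (cvc P) I.

Definition copy_rule V (a b : nat) (v : V) : arule V :=
  ARule (VA b (TCst v)) (fun l => nth R0 l 0%N) [:: (VA a (TCst v), AVar 0)].

Definition coh V (P : cgap V) (I : interp V) : gap V :=
  fun r => rules_of P r \/
    exists (v : V) (i : nat), (i < size (cvc P))%N /\
      (Rlt R0 (I (GVA (vc_a (cvc P) i) v))) /\
      I (GVA (vc_a (cvc P) i) v) = I (GVA (vc_b (cvc P) i) v) /\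
      r = copy_rule (vc_a (cvc P) i) (vc_b (cvc P) i) v.

Definition coherent V (P : cgap V) (M : interp V) : Prop :=
  cgap_model P M /\ least_model (coh P M) M.

Definition sumR (l : list R) : R := foldr Rplus R0 l.
Definition maxR (l : list R) : R := foldr Rmax R0 l.

Definition strong_eq V (P : cgap V) (I : interp V) : Prop :=
  coherent P I /\
  forall v : V,
    sumR (map (fun ab => I (GVA ab.2 v)) (cvc P)) =
    maxR (map (fun ab => I (GVA ab.1 v)) (cvc P)).

(* Pi_S for a state S (S v is the 0-based index of the chosen option) *)
Definition inst_gap V (P : cgap V) (S : V -> nat) : gap V :=
  fun r => rules_of P r \/
    exists v : V, r = copy_rule (vc_a (cvc P) (S v)) (vc_b (cvc P) (S v)) v.

Definition deviate n m (s : {ffun 'I_n -> 'I_m}) (i : 'I_n) (a : 'I_m)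
  : {ffun 'I_n -> 'I_m} := [ffun j => if j == i then a else s j].

Definition nash n m (u : 'I_n -> {ffun 'I_n -> 'I_m} -> R)
  (s : {ffun 'I_n -> 'I_m}) : Prop :=
  forall (i : 'I_n) (a : 'I_m), (Rle (u i (deviate s i a)) (u i s)).

(* Main.v *)
Require Import Defs.
From Stdlib Require Import Reals Lra ClassicalEpsilon FunctionalExtensionality.
From mathcomp Require Import all_boot.

Set Implicit Arguments.
Unset Strict Implicit.
Unset Printing Implicit Defensive.

Definition half : R := Rinv (Rplus R1 R1).

Definition Rltb (x y : R) : bool := if Rlt_dec x y then true else false.

Lemma RltbP x y : Rltb x y = true <-> Rlt x y.
Proof. rewrite /Rltb; case: Rlt_dec => //; split => //. Qed.

Definition fact_rule n (j : nat) : arule 'I_n :=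
  ARule (VA j (TVar _ 0)) (fun _ => R1) [::].

Definition prule n m (u : 'I_n -> {ffun 'I_n -> 'I_m} -> R)
  (S : {ffun 'I_n -> 'I_m}) (v : 'I_n) (k : 'I_m) : arule 'I_n :=
  ARule (VA (m + k) (TCst v))
    (fun _ => if Rltb (u v S) (u v (deviate S v k)) then half else R0)
    (List.map (fun w => (VA (m + S w) (TCst w), ACst R1)) (enum 'I_n)).

Definition Pg n m (u : 'I_n -> {ffun 'I_n -> 'I_m} -> R) : cgap 'I_n :=
  CGap (List.map (@fact_rule n) (iota 0 m) ++
        List.flat_map (fun S => List.flat_map (fun v =>
           List.map (fun k => prule u S v k) (enum 'I_m)) (enum 'I_n))
           (enum {ffun 'I_n -> 'I_m}))
       (List.map (fun j => (j, m + j)%N) (iota 0 m)).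

Definition pun n m (u : 'I_n -> {ffun 'I_n -> 'I_m} -> R)
  (S : {ffun 'I_n -> 'I_m}) (v : 'I_n) (k : nat) : bool :=
  [exists a : 'I_m, (nat_of_ord a == k) && Rltb (u v S) (u v (deviate S v a))].

Definition MS n m (u : 'I_n -> {ffun 'I_n -> 'I_m} -> R)
  (S : {ffun 'I_n -> 'I_m}) : interp 'I_n :=
  fun A => match A with
  | GVA p v => if (p < m)%N then R1 else if (p < m + m)%N then
       (if p - m == S v then R1 else if pun u S v (p - m) then half else R0)
       else R0
  | GEA _ _ _ => R0
  end.

Lemma MS_a n m u S p v : (p < m)%N -> @MS n m u S (GVA p v) = R1.
Proof. by rewrite /MS => ->. Qed.

Lemma MS_b n m u S (k : nat) v : (k < m)%N -> @MS n m u S (GVA (m + k) v) =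
  (if k == S v then R1 else if pun u S v k then half else R0).
Proof.
move=> km; rewrite /MS ltnNge leq_addr /= ltn_add2l km addKn //.
Qed.

Lemma vc_aP n m u i : (i < m)%N -> vc_a (cvc (@Pg n m u)) i = i.
Proof.
move=> im; rewrite /vc_a /Pg /=.
rewrite (nth_map 0%N) ?size_iota // nth_iota //.
Qed.

Lemma vc_bP n m u i : (i < m)%N -> vc_b (cvc (@Pg n m u)) i = (m + i)%N.
Proof.
move=> im; rewrite /vc_b /Pg /=.
rewrite (nth_map 0%N) ?size_iota // nth_iota //.
Qed.

Lemma size_cvc n m u : size (cvc (@Pg n m u)) = m.
Proof. by rewrite /Pg /= size_map size_iota. Qed.

Lemma In_seq (T : eqType) (x : T) (s : seq T) : x \in s -> List.In x s.
Proof.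
elim: s => //= y s IH; rewrite in_cons => /orP [/eqP -> | /IH]; [left|right] => //.
Qed.

Lemma In_seq' (T : eqType) (x : T) (s : seq T) : List.In x s -> x \in s.
Proof.
elim: s => //= y s IH [-> | /IH H]; rewrite in_cons ?eqxx ?H ?orbT //.
Qed.
Lemma half_pos : Rlt R0 half /\ Rlt half R1.
Proof. unfold half; split; lra. Qed.

Lemma In_crules n m u r : List.In r (crules (@Pg n m u)) ->
  (exists j, (j < m)%N /\ r = fact_rule n j) \/ (exists S v k, r = prule u S v k).
Proof.
rewrite /Pg /= List.in_app_iff => [[]].
  move=> /List.in_map_iff [j [<- /In_seq']]; rewrite mem_iota => /andP [_ jm].
  by left; exists j.
move=> /List.in_flat_map [S [_ /List.in_flat_map [v [_ /List.in_map_iff [k [<- _]]]]]].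
by right; exists S, v, k.
Qed.

Lemma fact_in n m u j : (j < m)%N -> List.In (fact_rule n j) (crules (@Pg n m u)).
Proof.
move=> jm; rewrite /Pg /= List.in_app_iff; left.
apply/List.in_map_iff; exists j; split => //; apply: In_seq; rewrite mem_iota /= add0n jm //.
Qed.

Lemma prule_in n m u S v k : List.In (prule u S v k) (crules (@Pg n m u)).
Proof.
rewrite /Pg /= List.in_app_iff; right.
apply/List.in_flat_map; exists S; split; first by apply: In_seq; rewrite mem_enum.
apply/List.in_flat_map; exists v; split; first by apply: In_seq; rewrite mem_enum.
apply/List.in_map_iff; exists k; split => //; apply: In_seq; rewrite mem_enum //.
Qed.

Lemma MS_valid n m u S : valid (@MS n m u S).
Proof.
have h := half_pos.
case=> [p v|p v w] /=; last by split; lra.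
case: ifP => _; first by split; lra.
case: ifP => _; last by split; lra.
case: ifP => _; first by split; lra.
case: ifP => _; split; lra.
Qed.

Lemma MS_ge0 n m u S A : Rle R0 (@MS n m u S A).
Proof. by case: (MS_valid u S A). Qed.

Lemma MS_b_one n m u S (k : nat) (v : 'I_n) : (k < m)%N ->
  Rle R1 (@MS n m u S (GVA (m + k) v)) -> k = S v.
Proof.
move=> km; rewrite MS_b //; have h := half_pos.
case: eqP => // _; case: ifP => _ ?; exfalso; lra.
Qed.

Lemma MS_sat_rules n m u S r : rules_of (@Pg n m u) r -> sat_rule (MS u S) r.
Proof.
have h := half_pos.
move=> /In_crules [[j [jm ->]] | [S' [v [k ->]]]].
  move=> th s _ _ /=; rewrite jm; lra.
move=> th s _ Hb.
have eS : S' = S.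
  apply/ffunP => w; apply: val_inj; apply: (MS_b_one (u:=u)); first exact: ltn_ord.
  refine (Hb (VA (m + S' w) (TCst w), ACst R1) _).
  apply/List.in_map_iff; exists w; split => //; apply: In_seq; rewrite mem_enum //.
subst S'.
change (Rle (if Rltb (u v S) (u v (deviate S v k)) then half else R0) (MS u S (GVA (m + k) v))).
case E: Rltb; last by apply: MS_ge0.
rewrite MS_b //; case: eqP => _; first lra.
have -> : pun u S v k by apply/existsP; exists k; rewrite eqxx E.
lra.
Qed.
Lemma in01_R1 : in01 R1.
Proof. split; lra. Qed.
Lemma in01_R0 : in01 R0.
Proof. split; lra. Qed.

Lemma I_fact n m u (G : gap 'I_n) (I : interp 'I_n) j v :
  (forall r, rules_of (@Pg n m u) r -> G r) -> gap_model G I -> (j < m)%N ->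
  Rle R1 (I (GVA j v)).
Proof.
move=> HG [_ HI] jm.
have := HI _ (HG _ (fact_in u jm)) (fun _ => v) (fun _ => R0) (fun _ => in01_R0).
by apply.
Qed.

Lemma inst_copy n m u (S : {ffun 'I_n -> 'I_m}) v :
  inst_gap (@Pg n m u) (fun v => nat_of_ord (S v)) (copy_rule (nat_of_ord (S v)) (m + S v) v).
Proof.
right; exists v; rewrite vc_aP ?vc_bP //.
Qed.

Lemma I_copy n m u (S : {ffun 'I_n -> 'I_m}) (I : interp 'I_n) w :
  gap_model (inst_gap (@Pg n m u) (fun v => nat_of_ord (S v))) I ->
  Rle R1 (I (GVA (m + S w) w)).
Proof.
move=> HI; have [_ HR] := HI.
have := HR _ (inst_copy u S w) (fun _ => w) (fun _ => R1) (fun _ => in01_R1).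
apply => Am /= [<- | //] /=.
apply: (I_fact (u:=u)) HI _ => //; by move=> r Hr; left.
Qed.

Lemma MS_least n m u (S : {ffun 'I_n -> 'I_m}) :
  least_model (inst_gap (@Pg n m u) (fun v => nat_of_ord (S v))) (MS u S).
Proof.
have h := half_pos.
split.
  split; first exact: MS_valid.
  move=> r [Hr | [v ->]]; first exact: MS_sat_rules.
  rewrite vc_aP ?vc_bP //.
  move=> th s Hs _.
  change (Rle (s 0%N) (MS u S (GVA (m + S v) v))).
  rewrite MS_b ?eqxx //; by case: (Hs 0%N).
move=> I HI [p v|p v w]; last by case: HI => /(_ (GEA p v w)) [].
have Hv : forall A, Rle R0 (I A) by move=> A; case: HI => /(_ A) [].
rewrite /MS; case: ifP => pm.
  apply: (I_fact (u:=u)) HI _ => //; by move=> r Hr; left.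
case: ifP => pmm; last exact: Hv.
have ep : p = (m + (p - m))%N by rewrite subnKC // leqNgt pm.
case: eqP => es.
  rewrite ep es; exact: (I_copy _ HI).
case E: pun; last exact: Hv.
move/existsP: E => [a /andP [/eqP ea ER]].
have [_ HR] := HI.
have := HR _ (or_introl (prule_in u S v a)) (fun _ => v) (fun _ => R0) (fun _ => in01_R0).
rewrite ep -ea.
move=> H; apply: Rle_trans (H _); first by rewrite /= ER; lra.
rewrite /=; move=> Am /List.in_map_iff [w [<- _]] /=; exact: (I_copy _ HI).
Qed.
Lemma least_unique V (G : gap V) M1 M2 :
  least_model G M1 -> least_model G M2 -> M1 = M2.
Proof.
move=> [H1 L1] [H2 L2]; apply: functional_extensionality => A.
apply: Rle_antisym; [exact: L1 | exact: L2].
Qed.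

Lemma least_ext V (G1 G2 : gap V) M : (forall r, G1 r <-> G2 r) ->
  least_model G1 M -> least_model G2 M.
Proof.
move=> E [[Hv HM] L]; split.
  split => // r /E; exact: HM.
move=> I [Iv IM]; apply: L; split => // r /E; exact: IM.
Qed.

Lemma coh_inst V (P : cgap V) I (S : V -> nat) :
  (forall v, (S v < size (cvc P))%N) ->
  (forall v i, (i < size (cvc P))%N ->
     (Rlt R0 (I (GVA (vc_a (cvc P) i) v)) /\
      I (GVA (vc_a (cvc P) i) v) = I (GVA (vc_b (cvc P) i) v)) <-> i = S v) ->
  forall r, coh P I r <-> inst_gap P S r.
Proof.
move=> HS H r; split.
  move=> [Hr | [v [i [ilt [Hp [He ->]]]]]]; first by left.
  right; exists v; have -> // : i = S v by apply/(H v i ilt).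
move=> [Hr | [v ->]]; first by left.
right; exists v, (S v); split => //.
have [Hp He] := (proj2 (H v (S v) (HS v)) erefl); by [].
Qed.

Lemma List_map_seq (A B : Type) (f : A -> B) (s : seq A) : List.map f s = map f s.
Proof. by elim: s => //= x s ->. Qed.

Lemma sumR_delta (k a l : nat) :
  sumR (map (fun j => if j == k then R1 else R0) (iota a l)) =
  (if (a <= k < a + l)%N then R1 else R0).
Proof.
elim: l a => [|l IH] a /=.
  rewrite addn0; case: leqP => //= ak; rewrite ltnNge ak //.
rewrite IH; case: eqP => [-> | nk].
  rewrite leqnn /= addnS ltnS leq_addr ltnNge leqnn /=; lra.
rewrite addSnnS; case: (leqP a k) => ak.
  have -> : (a < k)%N by rewrite ltn_neqAle ak andbT; apply/eqP => e; apply: nk; rewrite e.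
  rewrite /=; case: (k < a + l.+1)%N; lra.
rewrite /= ltnNge (ltnW ak) /=; lra.
Qed.

Lemma maxR_ones (s : seq R) : (forall x, List.In x s -> x = R1) ->
  s <> [::] -> maxR s = R1.
Proof.
elim: s => // x s IH H _.
change (Rmax x (maxR s) = R1).
rewrite (H x); last by left.
case: s IH H => [|y s] IH H.
  change (Rmax R1 R0 = R1); apply: Rmax_left; lra.
rewrite IH //; first by apply: Rmax_left; lra.
by move=> z Hz; apply: H; right.
Qed.

Lemma deviate_id n m (S : {ffun 'I_n -> 'I_m}) i : deviate S i (S i) = S.
Proof. apply/ffunP => j; rewrite ffunE; case: eqP => [->|] //. Qed.

Lemma nopun n m u (S : {ffun 'I_n -> 'I_m}) v k : nash u S -> pun u S v k = false.
Proof.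
move=> HN; apply/negbTE/negP => /existsP [a /andP [_ /RltbP Hlt]].
have := HN v a; lra.
Qed.
Lemma MS_cohcond n m u (S : {ffun 'I_n -> 'I_m}) (v : 'I_n) (i : nat) :
  (i < size (cvc (@Pg n m u)))%N ->
  (Rlt R0 (MS u S (GVA (vc_a (cvc (Pg u)) i) v)) /\
   MS u S (GVA (vc_a (cvc (Pg u)) i) v) = MS u S (GVA (vc_b (cvc (Pg u)) i) v))
  <-> i = S v.
Proof.
rewrite size_cvc => im; rewrite vc_aP // vc_bP // MS_a // MS_b //.
have h := half_pos.
case: eqP => [-> | ne]; first by split => // _; split; lra.
split => // [[_]]; case: pun; lra.
Qed.

Theorem mainTheorem3 (n m : nat) (u : 'I_n -> {ffun 'I_n -> 'I_m} -> R) :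
  exists P : cgap 'I_n,
    wf_cgap P /\ size (cvc P) = m /\
    (forall S : {ffun 'I_n -> 'I_m},
        exists M, least_model (inst_gap P (fun v => nat_of_ord (S v))) M) /\
    (forall (S : {ffun 'I_n -> 'I_m}) (M : interp 'I_n),
        least_model (inst_gap P (fun v => nat_of_ord (S v))) M ->
        (strong_eq P M <-> nash u S)) /\
    (forall I : interp 'I_n, strong_eq P I ->
        exists S : {ffun 'I_n -> 'I_m},
          least_model (inst_gap P (fun v => nat_of_ord (S v))) I).
Proof.
have h := half_pos.
exists (Pg u); split.
  move=> r /In_crules [[j [_ ->]] | [S [v [k ->]]]].
    split; first by move=> xs _; exact: in01_R1.
    by [].
  split.
    move=> xs _ /=; case: Rltb; split; lra.
  move=> Am /List.in_map_iff [w [<- _]] /=; exact: in01_R1.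
split; first exact: size_cvc.
split; first by move=> S; exists (MS u S); exact: MS_least.
split.
  move=> S M HM; have -> := least_unique HM (MS_least u S).
  split.
    move=> [[[_ Hvc] _] _] i a; apply: Rnot_lt_le => Hlt.
    have Hp : pun u S i a by apply/existsP; exists a; rewrite eqxx /=; apply/RltbP.
    have na : nat_of_ord a <> S i.
      move=> e; have ea : a = S i by apply: val_inj.
      move: Hlt; rewrite ea deviate_id; lra.
    have [j [jlt [_ Hz]]] := Hvc i; rewrite size_cvc in jlt.
    case: (eqVneq j (S i)) => [ej | nj].
      have := Hz a; rewrite size_cvc vc_bP // MS_b // => /(_ (ltn_ord a)).
      have -> : (nat_of_ord a == S i) = false by apply/eqP.
      rewrite Hp => H; have := H ltac:(by move=> e; apply: na; rewrite e ej); lra.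
    have := Hz (S i); rewrite size_cvc vc_bP // MS_b // eqxx => /(_ (ltn_ord _)) H.
    have := H ltac:(by move=> e; move: nj; rewrite e eqxx); lra.
  move=> HN.
  have Hmod : gap_model (rules_of (Pg u)) (MS u S).
    split; [exact: MS_valid | move=> r Hr; exact: MS_sat_rules].
  split; first split; first split => //.
  - move=> v; exists (S v); rewrite size_cvc; split; first exact: ltn_ord.
    rewrite vc_aP // vc_bP // MS_b // MS_a // eqxx; split => // j jm ne.
    rewrite vc_bP // MS_b //; have -> : (j == S v) = false by apply/eqP.
    by rewrite nopun.
  - apply: (least_ext _ (MS_least u S)) => r; apply: iff_sym; apply: coh_inst.
      by move=> v; rewrite size_cvc.
    move=> v i; exact: MS_cohcond.
  - move=> v.
    change (sumR (map (fun ab => MS u S (GVA ab.2 v)) (List.map (fun j => (j, m + j)%N) (iota 0 m)))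
      = maxR (map (fun ab => MS u S (GVA ab.1 v)) (List.map (fun j => (j, m + j)%N) (iota 0 m)))).
    rewrite !List_map_seq -!map_comp.
    have -> : map ((fun ab => MS u S (GVA ab.2 v)) \o (fun j => (j, m + j)%N)) (iota 0 m)
            = map (fun j : nat => if j == nat_of_ord (S v) then R1 else R0) (iota 0 m).
      apply/eq_in_map => j; rewrite mem_iota add0n => /andP [_ jm].
      change (MS u S (GVA (m + j) v) = (if j == nat_of_ord (S v) then R1 else R0)).
      by rewrite MS_b // nopun //; case: eqP.
    rewrite sumR_delta /= add0n ltn_ord.
    symmetry; apply: maxR_ones.
      move=> x /List.in_map_iff [j [<- /In_seq']]; rewrite mem_iota /= add0n => jm.
      exact: MS_a.
    have m0 : (0 < m)%N by apply: leq_ltn_trans (ltn_ord (S v)).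
    move=> /(congr1 size); rewrite size_map size_iota => e; move: m0; rewrite e //.
move=> I [[[HgI Hvc] HL] _].
have Hch : forall v, exists i : 'I_m,
    I (GVA (m + i) v) = I (GVA i v) /\
    forall j, (j < m)%N -> j <> i -> I (GVA (m + j) v) = R0.
  move=> v; have [j [jlt [Hj Hz]]] := Hvc v; rewrite size_cvc in jlt.
  rewrite (vc_aP u jlt) (vc_bP u jlt) in Hj.
  exists (Ordinal jlt) => /=; split => //.
  move=> j' j'm ne; rewrite -(vc_bP u j'm); apply: Hz => //; rewrite size_cvc //.
pose f v := proj1_sig (constructive_indefinite_description _ (Hch v)).
have fP v := proj2_sig (constructive_indefinite_description _ (Hch v)).
exists [ffun v => f v].
apply: (least_ext _ HL); apply: coh_inst.
  by move=> v; rewrite size_cvc ffunE.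
move=> v i; rewrite size_cvc => im; rewrite vc_aP // vc_bP // ffunE.
have [E Z] := fP v; split.
  move=> [Hp He]; case: (Nat.eq_dec i (f v)) => // ne.
  have := Z _ im ne; rewrite -He; lra.
move=> ->; split; last by rewrite E.
have := @I_fact n m u _ I (f v) v (fun r Hr => Hr) HgI (ltn_ord _); lra.
Qed.
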